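(* Let $Z\subset C'\subset P$ be subschemes of the plane $H=\{x=0\}$, where $Z$ is a nonempty zero-dimensional scheme, $I_{C'}=(x,p)$ and $I_P=(x,ph)$ with $p,h\in S$ nonzero homogeneous, $\delta=\deg p$ and $d=2\delta+\deg h$. Let $J\subseteq R$ be a homogeneous ideal admitting the expected residual sequence, i.e. fitting into an exact sequence $$0\to I_{C'}(-1)\xrightarrow{\ \cdot x\ } J\to ph\,I_{Z,H}\to0$$ (equivalently, $(J+xR)/xR=ph\,I_{Z,H}$ and $J:(x)=(x,p)$). Then $J$ is saturated, $J=I_X$ for a one-dimensional closed subscheme $X\subset\mathbb P^3$ of degree $d$ and arithmetic genus $$\binom{d-\delta-1}{2}+\binom{\delta-1}{2}+\delta-\deg Z-1.$$
   Context: $K$ is an algebraically closed field, $R=K[x,y,z,t]$, $S=K[y,z,t]$ identified with $R/xR$, and $H\subset\mathbb P^3_K$ is the plane with ideal $xR$. $I_X$ denotes the saturated homogeneous ideal of a closed subscheme $X$, and $I_{Z,H}\subset S$ is the saturated homogeneous ideal of $Z$ as a subscheme of $H\cong\operatorname{Proj}(S)$. *)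

(* Defs.v *)
From HB Require Import structures.
From mathcomp Require Import all_boot all_order all_algebra.
From mathcomp Require Import mpoly.
Set Implicit Arguments. Unset Strict Implicit. Unset Printing Implicit Defensive.
Import GRing.Theory.
Local Open Scope ring_scope.

(* R = K[x,y,z,t] is {mpoly K[4]} with x = 'X_0, y = 'X_1, z = 'X_2, t = 'X_3.
   S = K[y,z,t] is {mpoly K[3]} with y = 'X_0, z = 'X_1, t = 'X_2. *)

Section Defs.
Variables (K : fieldType) (n : nat).
Local Notation P := {mpoly K[n]}.

Definition is_ideal (J : pred P) : Prop :=
  [/\ 0 \in J,
      (forall f g, f \in J -> g \in J -> f + g \in J) &
      (forall r f, f \in J -> r * f \in J)].

Definition is_homog_ideal (J : pred P) : Prop :=
  is_ideal J /\ forall f k, f \in J -> pihomog mdeg k f \in J.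

(* J is saturated: J : m^oo = J, m = (X_0,...,X_{n-1}) the irrelevant ideal.
   (f m^k is generated by the X^m f with |m| = k.) *)
Definition saturated (J : pred P) : Prop :=
  forall f, (exists k, forall m : 'X_{1..n}, mdeg m = k -> 'X_[m] * f \in J) ->
            f \in J.

Definition indep_mod (J : pred P) (d k : nat) : Prop :=
  exists F : 'I_k -> P,
    (forall i, F i \is d.-homog) /\
    forall c : 'I_k -> K, (\sum_(i < k) c i *: F i) \in J -> forall i, c i = 0.

Definition hilb_fun (J : pred P) (d h : nat) : Prop :=
  indep_mod J d h /\ ~ indep_mod J d h.+1.

Definition hilb_poly (J : pred P) (Q : {poly int}) : Prop :=
  exists N, forall d, (N <= d)%N -> exists h : nat, hilb_fun J d h /\ h%:Z = Q.[d%:Z].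
End Defs.

Section Plane.
Variable K : fieldType.
Definition restrH (f : {mpoly K[4]}) : {mpoly K[3]} :=
  f \mPo [tuple 0; 'X_0; 'X_1; 'X_2].
Definition incS (g : {mpoly K[3]}) : {mpoly K[4]} :=
  g \mPo [tuple 'X_1; 'X_2; 'X_3].
End Plane.

(* Main.v *)
Require Import Defs.
From HB Require Import structures.
From mathcomp Require Import all_boot all_order all_algebra.
From mathcomp Require Import mpoly zify.
From Stdlib Require Import Classical.
Import GRing.Theory.
Local Open Scope ring_scope.
Set Implicit Arguments. Unset Strict Implicit. Unset Printing Implicit Defensive.
Definition spc {K : fieldType} {V : vectType K} (U : {vspace V}) (A : V -> Prop) :=
  forall v, v \in U <-> A v.

Section VS.
Variables (K : fieldType) (V W : vectType K).

Lemma dim_add_line (U : {vspace V}) v : v \notin U -> \dim (U + <[v]>)%VS = (\dim U).+1.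
Proof.
move=> vU; rewrite dimv_disjoint_sum.
  have v0 : v != 0 by apply: contraNneq vU => ->; rewrite rpred0.
  by rewrite dim_vline v0 addn1.
apply/eqP; rewrite -subv0; apply/subvP => w /memv_capP [wU /vlineP [c wc]].
rewrite memv0; case: (eqVneq c 0) => [c0|c0]; first by rewrite wc c0 scale0r.
by move: wU; rewrite wc => /(memvZ (c^-1)); rewrite scalerA mulVf // scale1r => h; rewrite h in vU.
Qed.

Lemma ex_spc (A : V -> Prop) : A 0 -> (forall u v, A u -> A v -> A (u + v)) ->
  (forall c u, A u -> A (c *: u)) -> exists U, spc U A.
Proof.
move=> A0 AD AZ.
suff H : forall k (U : {vspace V}), (\dim {:V} - \dim U <= k)%N ->
   (forall v, v \in U -> A v) -> exists U, spc U A.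
  by apply: (H _ 0%VS (leqnn _)) => v; rewrite memv0 => /eqP ->.
elim=> [|k IH] U hk hU.
  exists U => v; split; first exact: hU.
  have -> : U = fullv.
    apply/eqP; rewrite eqEdim subvf /=; by rewrite -subn_eq0 -leqn0.
  by rewrite memvf.
case: (classic (forall v, A v -> v \in U)) => [H|H].
  by exists U => v; split; [exact: hU| exact: H].
have [v Hv] := not_all_ex_not _ _ H.
have [Av vU] : A v /\ v \notin U.
  split; first by apply: NNPP => /= nA; apply: Hv => /nA.
  by apply/negP => vU; apply: Hv.
apply: (IH (U + <[v]>)%VS).
  rewrite dim_add_line //.
  have := dimvS (subvf (U + <[v]>)%VS); rewrite dim_add_line // => h.
  by rewrite subnS -ltnS prednK ?subn_gt0 //; apply: leq_ltn_trans hk _; rewrite ltnS subnS leq_pred.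
move=> w /memv_addP [u uU [x /vlineP [c ->] ->]].
by apply: AD; [exact: hU | exact: AZ].
Qed.

Lemma spc_eq (U1 U2 : {vspace V}) A : spc U1 A -> spc U2 A -> U1 = U2.
Proof.
move=> h1 h2; apply/subv_anti/andP; split; apply/subvP => v.
  by move/h1/h2.
by move/h2/h1.
Qed.

Lemma dim_img (f : {linear V -> W}) (A : V -> Prop) U :
  spc U A -> (forall v, A v -> f v = 0 -> v = 0) ->
  exists UB, spc UB (fun w => exists v, A v /\ w = f v) /\ \dim UB = \dim U.
Proof.
move=> hU hinj; exists (linfun f @: U)%VS; split.
  move=> w; split.
    by case/memv_imgP => v vU ->; exists v; rewrite lfunE; split => //; apply/hU.
  by case=> v [Av ->]; rewrite -lfunE; apply: memv_img; apply/hU.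
apply: limg_dim_eq; apply/eqP; rewrite -subv0; apply/subvP => v /memv_capP [vU].
by rewrite memv_ker lfunE memv0 => /eqP fv; apply/eqP; apply: hinj => //; apply/hU.
Qed.

Lemma dim_rank (f : {linear V -> W}) (A : V -> Prop) U :
  spc U A ->
  exists UB UK, spc UB (fun w => exists v, A v /\ w = f v) /\
     spc UK (fun v => A v /\ f v = 0) /\ (\dim UK + \dim UB = \dim U)%N.
Proof.
move=> hU; exists (linfun f @: U)%VS, (U :&: lker (linfun f))%VS; split; last split.
- move=> w; split.
    by case/memv_imgP => v vU ->; exists v; rewrite lfunE; split => //; apply/hU.
  by case=> v [Av ->]; rewrite -lfunE; apply: memv_img; apply/hU.
- move=> v; rewrite memv_cap memv_ker lfunE; split.
    by case/andP => /hU ? /eqP.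
  by case=> /hU -> ->; rewrite eqxx.
- exact: limg_ker_dim.
Qed.

Definition indepV (A : V -> Prop) k :=
  exists F : 'I_k -> V, forall c : 'I_k -> K, A (\sum_(i < k) c i *: F i) -> forall i, c i = 0.

Lemma indepV_mono A k k' : (k' <= k)%N -> indepV A k -> indepV A k'.
Proof.
move=> hk [F hF]; exists (fun i => F (widen_ord hk i)) => c hc i.
pose c' (j : 'I_k) := if @insub _ (fun x => x < k')%N ('I_k') (val j) is Some j' then c j' else 0.
have := hF c'.
have -> : \sum_(j < k) c' j *: F j = \sum_(i < k') c i *: F (widen_ord hk i).
  rewrite (bigID (fun j : 'I_k => (j < k')%N)) /=.
  rewrite [X in _ + X]big1 ?addr0; last first.
    by move=> j /negbTE hj; rewrite /c' insubF // scale0r.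
  rewrite (eq_bigl (fun j : 'I_k => xpredT j && (j < k')%N)) // (@big_ord_narrow_cond _ _ _ k' k xpredT _ hk) /=; apply: eq_bigr => j hj.
  rewrite /c' /= insubT /=; first exact: ltn_ord.
  by move=> h; do 2 f_equal; apply/val_inj.
move=> /(_ hc (widen_ord hk i)); rewrite /c' /= insubT /=; first exact: ltn_ord.
by move=> h; have -> : Sub (nat_of_ord i) h = i by apply/val_inj.
Qed.

Lemma indepV_iff A U k : spc U A -> (indepV A k <-> (k <= \dim {:V} - \dim U)%N).
Proof.
move=> hU; split.
  case=> F hF.
  pose X := [tuple F i | i < k].
  have XE (i : 'I_k) : X`_i = F i by rewrite -tnth_nth tnth_mktuple.
  have fX : free X.
    apply/freeP => c hc i; apply: hF; rewrite (eq_bigr (fun i => c i *: X`_i)).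
      by rewrite hc; apply/hU; apply: rpred0.
    by move=> j _; rewrite XE.
  have cap0 : (<<X>> :&: U = 0)%VS.
    apply/eqP; rewrite -subv0; apply/subvP => w /memv_capP [wX wU].
    rewrite memv0; apply/eqP.
    rewrite (coord_span wX); apply: big1 => i _.
    suff -> : coord X i w = 0 by rewrite scale0r.
    apply: hF (fun i => coord X i w) _ i.
    rewrite (eq_bigr (fun i => coord X i w *: X`_i)); last by move=> j _; rewrite XE.
    by rewrite -coord_span //; apply/hU.
  have := dimvS (subvf (<<X>> + U)%VS); rewrite dimv_disjoint_sum //.
  move: fX; rewrite /free => /eqP ->; rewrite size_tuple => h.
  by rewrite leq_subRL ?(leq_trans _ h) // ?leq_addl // addnC.
move=> hk; apply: (indepV_mono hk).
pose X := vbasis (U^C)%VS.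
have := vbasisP (U^C)%VS; rewrite -/X => bX.
rewrite -dimv_compl; exists (fun i => X`_i) => c hc i.
have fX := basis_free bX.
move/freeP: fX; apply=> //.
apply/eqP; rewrite -memv0 -(capv_compl U) memv_cap; apply/andP; split; first exact/hU.
by apply: rpred_sum => j _; apply: rpredZ; apply: (basis_mem bX); apply: mem_nth; rewrite size_tuple.
Qed.

End VS.
Section Poly.
Variable K : fieldType.

Lemma mpoly_lin_ext n (V : lmodType K) (f g : {mpoly K[n]} -> V) :
  (forall c p q, f (c *: p + q) = c *: f p + f q) ->
  (forall c p q, g (c *: p + q) = c *: g p + g q) ->
  (forall m, f 'X_[m] = g 'X_[m]) -> forall p, f p = g p.
Proof.
move=> lf lg hX; elim/mpolyind => [|c m p _ _ IH].
  have f0 : f 0 = 0.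
    by have := lf 1 0 0; rewrite scaler0 addr0 scale1r => h; apply: (@addrI _ (f 0)); rewrite addr0 -h.
  have g0 : g 0 = 0.
    by have := lg 1 0 0; rewrite scaler0 addr0 scale1r => h; apply: (@addrI _ (g 0)); rewrite addr0 -h.
  by rewrite f0 g0.
by rewrite lf lg IH hX.
Qed.

Lemma pihomog_mulh n (c a : {mpoly K[n]}) e j : c \is e.-homog ->
  pihomog mdeg (e + j) (c * a) = c * pihomog mdeg j a.
Proof.
move=> hc; move: a; apply: mpoly_lin_ext.
- by move=> x p q; rewrite mulrDr -scalerAr linearP.
- by move=> x p q; rewrite linearP mulrDr -scalerAr.
move=> m; have hXm : ('X_[m] : {mpoly K[n]}) \is (mdeg m).-homog by rewrite dhomogX.
have hm := dhomogM hc hXm.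
rewrite !pihomogX; case: eqP => [<-|ne].
  by rewrite pihomog_dE.
rewrite mulr0 (pihomog_ne0 _ hm) //; apply/eqP => /addnI h; exact: ne.
Qed.

Lemma pihomog_mulh_lt n (c a : {mpoly K[n]}) e j : c \is e.-homog -> (j < e)%N ->
  pihomog mdeg j (c * a) = 0.
Proof.
move=> hc hj; move: a; apply: mpoly_lin_ext => //.
- by move=> x p q; rewrite mulrDr -scalerAr linearP.
- by move=> x p q; rewrite scaler0 addr0.
move=> m; have hXm : ('X_[m] : {mpoly K[n]}) \is (mdeg m).-homog by rewrite dhomogX.
have hm := dhomogM hc hXm.
rewrite (pihomog_ne0 _ hm) //; apply/eqP => h; move: hj; by rewrite -h ltnNge leq_addr.
Qed.

Lemma dhomog_valD n t (u v : dhomog n K t) : val (u + v) = val u + val v.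
Proof. by []. Qed.
Lemma dhomog_valZ n t c (u : dhomog n K t) : val (c *: u) = c *: val u.
Proof. by []. Qed.
Lemma dhomog_val0 n t : val (0 : dhomog n K t) = 0.
Proof. by []. Qed.

Definition hd n (A : {mpoly K[n.+1]} -> Prop) t k :=
  exists U : {vspace dhomog n.+1 K t}, spc U (fun v => A (val v)) /\ \dim U = k.

Definition closedP n (A : {mpoly K[n]} -> Prop) :=
  [/\ A 0, (forall u v, A u -> A v -> A (u + v)) & (forall c u, A u -> A (c *: u))].

Lemma hd_ex n (A : {mpoly K[n.+1]} -> Prop) t : closedP A -> exists k, hd A t k.
Proof.
case=> A0 AD AZ.
have [U hU] := @ex_spc K (dhomog n.+1 K t) (fun v => A (val v)) A0
  (fun u v hu hv => AD _ _ hu hv) (fun c u hu => AZ c _ hu).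
by exists (\dim U), U.
Qed.

Lemma hd_uniq n (A : {mpoly K[n.+1]} -> Prop) t k1 k2 : hd A t k1 -> hd A t k2 -> k1 = k2.
Proof. by case=> U1 [h1 <-] [U2 [h2 <-]]; rewrite (spc_eq h1 h2). Qed.

Lemma hd_full n t : hd (fun _ : {mpoly K[n.+1]} => True) t 'C(t + n, t).
Proof.
exists fullv; split; first by move=> v; rewrite memvf.
by rewrite dimvf.
Qed.

Lemma dim_dh n t : \dim (fullv : {vspace dhomog n.+1 K t}) = 'C(t + n, t).
Proof. by rewrite dimvf. Qed.

Lemma indep_modE n (J : pred {mpoly K[n.+1]}) t k :
  indep_mod J t k <-> indepV (fun v : dhomog n.+1 K t => val v \in J) k.
Proof.
split.
  case=> F [hF hi].
  exists (fun i => DHomog (hF i)) => c hc; apply: hi.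
  by move: hc; rewrite raddf_sum.
case=> F hF; exists (fun i => val (F i)); split; first by move=> i; apply: dhomog_is_dhomog.
move=> c hc.
by apply: hF; rewrite raddf_sum.
Qed.

Lemma hilb_hd n (J : pred {mpoly K[n.+1]}) t k :
  hd (fun f => f \in J) t k -> hilb_fun J t ('C(t + n, t) - k).
Proof.
case=> U [hU <-]; rewrite /hilb_fun !indep_modE !(indepV_iff _ hU) dim_dh.
by rewrite leqnn ltnn.
Qed.

Lemma hilb_hd_inv n (J : pred {mpoly K[n.+1]}) t k h :
  hd (fun f => f \in J) t k -> hilb_fun J t h -> h = ('C(t + n, t) - k)%N.
Proof.
case=> U [hU <-]; rewrite /hilb_fun !indep_modE !(indepV_iff _ hU) dim_dh.
by case=> h1 /negP; rewrite -ltnNge ltnS => h2; apply/eqP; rewrite eqn_leq h1.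
Qed.

End Poly.
Section MulMap.
Variables (K : fieldType) (n : nat) (c : {mpoly K[n.+1]}) (e t : nat).
Hypothesis hc : c \is e.-homog.

Definition mulh (v : dhomog n.+1 K t) : dhomog n.+1 K (e + t) :=
  DHomog (dhomogM hc (dhomog_is_dhomog v)).

Lemma mulh_is_linear : linear mulh.
Proof. by move=> a u v; apply/val_inj => /=; rewrite mulrDr -scalerAr. Qed.

HB.instance Definition _ := GRing.isLinear.Build K (dhomog n.+1 K t) (dhomog n.+1 K (e + t)) _ mulh mulh_is_linear.

Lemma mulhE v : val (mulh v) = c * val v. Proof. by []. Qed.

End MulMap.

Lemma spc_ext (K : fieldType) (V : vectType K) (U : {vspace V}) (A B : V -> Prop) :
  spc U A -> (forall v, A v <-> B v) -> spc U B.
Proof. by move=> h hAB v; rewrite h hAB. Qed.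

Lemma hd_mul (K : fieldType) n (c : {mpoly K[n.+1]}) e t (A B : {mpoly K[n.+1]} -> Prop) (k : nat) :
  c != 0 -> c \is e.-homog -> (forall q j, B q -> B (pihomog mdeg j q)) ->
  (forall f, f \is (e + t).-homog -> (A f <-> exists q, B q /\ f = c * q)) ->
  hd B t k -> hd A (e + t) k.
Proof.
move=> c0 hc hB hA [U [hU <-]].
have inj : forall v : dhomog n.+1 K t, B (val v) -> mulh hc v = 0 -> v = 0.
  move=> v _ hv; apply/val_inj; move/(congr1 val): hv; rewrite mulhE /= => /eqP.
  by rewrite mulf_eq0 (negbTE c0) /= => /eqP.
have [UB [hUB dUB]] := @dim_img _ _ _ (mulh hc (t:=t)) _ _ hU inj.
exists UB; split => //; apply: (spc_ext hUB) => w; split.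
  case=> v [Bv ->]; apply/hA; first exact: dhomog_is_dhomog.
  by exists (val v).
move=> /hA [] //; first exact: dhomog_is_dhomog.
move=> q [Bq wq].
exists (DHomog (pihomogP mdeg t q)); split; first exact: hB.
apply/val_inj; rewrite mulhE /= -(@pihomog_mulh _ _ c q e t hc) -wq pihomog_dE //.
exact: dhomog_is_dhomog.
Qed.
Section Restr.
Variables (K : fieldType) (n : nat).

Definition rtup : n.+1.-tuple {mpoly K[n]} :=
  [tuple (if unlift ord0 i is Some j then 'X_j else 0) | i < n.+1].
Definition restr (f : {mpoly K[n.+1]}) : {mpoly K[n]} := f \mPo rtup.
Definition itup : n.-tuple {mpoly K[n.+1]} := [tuple 'X_(lift ord0 i) | i < n].
Definition incl (g : {mpoly K[n]}) : {mpoly K[n.+1]} := g \mPo itup.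
Definition mtail (m : 'X_{1..n.+1}) : 'X_{1..n} := [multinom m (lift ord0 i) | i < n].
Definition mcons0 (m : 'X_{1..n}) : 'X_{1..n.+1} :=
  [multinom (if unlift ord0 i is Some j then m j else 0%N) | i < n.+1].

Lemma restrX (m : 'X_{1..n.+1}) : restr 'X_[m] = if m ord0 == 0%N then 'X_[mtail m] else 0.
Proof.
rewrite /restr comp_mpolyX big_ord_recl tnth_mktuple unlift_none expr0n.
rewrite (@mpolyXE_id _ K (mtail m)).
have -> : \prod_(i < n) tnth rtup (lift ord0 i) ^+ m (lift ord0 i) = \prod_(i < n) 'X_i ^+ (mtail m i).
  by apply: eq_bigr => i _; rewrite tnth_mktuple liftK mnmE.
by case: eqP => _; rewrite ?mul1r ?mul0r.
Qed.

Lemma mdeg_mtail (m : 'X_{1..n.+1}) : mdeg m = (m ord0 + mdeg (mtail m))%N.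
Proof.
rewrite !mdegE big_ord_recl; congr (_ + _)%N; apply: eq_bigr => i _; by rewrite mnmE.
Qed.

Lemma inclX (m : 'X_{1..n}) : incl 'X_[m] = 'X_[mcons0 m].
Proof.
rewrite /incl comp_mpolyX (@mpolyXE_id _ K (mcons0 m)) big_ord_recl mnmE unlift_none expr0 mul1r.
apply: eq_bigr => i _; by rewrite tnth_mktuple mnmE liftK.
Qed.

Lemma mtail_mcons0 (m : 'X_{1..n}) : mtail (mcons0 m) = m.
Proof. by apply/mnmP => i; rewrite !mnmE liftK. Qed.

Lemma mcons0_0 (m : 'X_{1..n}) : mcons0 m ord0 = 0%N.
Proof. by rewrite mnmE unlift_none. Qed.

Lemma mdeg_mcons0 (m : 'X_{1..n}) : mdeg (mcons0 m) = mdeg m.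
Proof. by rewrite mdeg_mtail mcons0_0 mtail_mcons0. Qed.

Lemma mcons0_mtail (m : 'X_{1..n.+1}) : m ord0 = 0%N -> mcons0 (mtail m) = m.
Proof.
move=> h; apply/mnmP => i; rewrite mnmE; case: (unliftP ord0 i) => [j ->|->].
  by rewrite mnmE.
by rewrite h.
Qed.

Lemma restrD f g : restr (f + g) = restr f + restr g. Proof. exact: raddfD. Qed.
Lemma restrZ a f : restr (a *: f) = a *: restr f. Proof. exact: linearZ. Qed.
Lemma restrM f g : restr (f * g) = restr f * restr g. Proof. exact: rmorphM. Qed.
Lemma restrB f g : restr (f - g) = restr f - restr g. Proof. exact: raddfB. Qed.
Lemma restr0 : restr 0 = 0. Proof. exact: raddf0. Qed.
Lemma inclD f g : incl (f + g) = incl f + incl g. Proof. exact: raddfD. Qed.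
Lemma inclZ a f : incl (a *: f) = a *: incl f. Proof. exact: linearZ. Qed.
Lemma inclM f g : incl (f * g) = incl f * incl g. Proof. exact: rmorphM. Qed.
Lemma incl0 : incl 0 = 0. Proof. exact: raddf0. Qed.

Lemma restrX0 : restr 'X_ord0 = 0.
Proof. by rewrite restrX mnm1E eqxx. Qed.

Lemma restr_incl g : restr (incl g) = g.
Proof.
move: g; apply: (mpoly_lin_ext (f := fun g => restr (incl g)) (g := id)).
- by move=> a p q; rewrite inclD inclZ restrD restrZ.
- by [].
by move=> m; rewrite inclX restrX mcons0_0 eqxx mtail_mcons0.
Qed.

Lemma taylor f : exists a, f = 'X_ord0 * a + incl (restr f).
Proof.
elim/mpolyind: f => [|c m p _ _ [a ha]].
  by exists 0; rewrite mulr0 add0r restr0 incl0.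
have [b hb] : exists b, 'X_[m] = 'X_ord0 * b + incl (restr 'X_[m]).
  rewrite restrX; case: eqP => h.
    by exists 0; rewrite mulr0 add0r inclX mcons0_mtail.
  exists 'X_[m - U_(ord0)]; rewrite incl0 addr0 -mpolyXD; congr 'X_[_].
  apply/mnmP => i; rewrite mnmDE mnmBE mnm1E.
  case: eqP => [<-|]; last by rewrite add0n subn0.
  by rewrite add1n subn1 prednK // lt0n; apply/eqP.
exists (c *: b + a).
rewrite restrD restrZ inclD inclZ {1}hb {1}ha.
rewrite mulrDr scalerDr -scalerAr; rewrite !addrA; congr (_ + _).
by rewrite -!addrA; congr (_ + _); rewrite addrC.
Qed.

Lemma restr_ker f : restr f = 0 -> exists a, f = 'X_ord0 * a.
Proof. by move=> h; case: (taylor f) => a ha; exists a; rewrite {1}ha h incl0 addr0. Qed.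

Lemma restr_pihomog j f : restr (pihomog mdeg j f) = pihomog mdeg j (restr f).
Proof.
move: f; apply: (mpoly_lin_ext (f := fun f => restr (pihomog mdeg j f))
  (g := fun f => pihomog mdeg j (restr f))).
- by move=> a p q; rewrite linearP restrD restrZ.
- by move=> a p q; rewrite restrD restrZ linearP.
move=> m; rewrite pihomogX (fun_if restr) restr0 restrX -[_ == j]/(mdeg m == j)%N mdeg_mtail.
case: (m ord0 =P 0%N) => [->|_]; rewrite ?add0n.
  by rewrite pihomogX.
by rewrite pihomog0; case: ifP.
Qed.

Lemma restr_homog d f : f \is d.-homog -> restr f \is d.-homog.
Proof.
by rewrite !homog_piE => /eqP h; rewrite -restr_pihomog h.
Qed.

End Restr.
Section RhoMap.
Variables (K : fieldType) (n t : nat).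

Definition rho (v : dhomog n.+2 K t) : dhomog n.+1 K t :=
  DHomog (restr_homog (dhomog_is_dhomog v)).

Lemma rho_is_linear : linear rho.
Proof. by move=> a u v; apply/val_inj => /=; rewrite restrD restrZ. Qed.

HB.instance Definition _ := GRing.isLinear.Build K (dhomog n.+2 K t) (dhomog n.+1 K t) _ rho rho_is_linear.

Lemma rhoE v : val (rho v) = restr (val v). Proof. by []. Qed.
End RhoMap.

Definition homogC n (K : fieldType) (A : {mpoly K[n]} -> Prop) :=
  forall f j, A f -> A (pihomog mdeg j f).

Lemma dhomogX' (K : fieldType) k d (m : 'X_{1..k}) :
  (('X_[m] : {mpoly K[k]}) \is d.-homog) = (mdeg m == d)%N.
Proof. by rewrite dhomogX. Qed.

Lemma X0_homog (K : fieldType) n : ('X_ord0 : {mpoly K[n.+1]}) \is 1.-homog.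
Proof. by rewrite dhomogX' mdeg1. Qed.

Lemma hd_split (K : fieldType) n t (A : {mpoly K[n.+2]} -> Prop) (k1 k2 : nat) :
  closedP A -> homogC A ->
  hd (fun g => exists f, A f /\ restr f = g) (1 + t) k1 ->
  hd (fun a => A ('X_ord0 * a)) t k2 ->
  hd A (1 + t) (k2 + k1).
Proof.
move=> cA hA [UB [hUB dUB]] [UX [hUX dUX]].
have [U hU] := @ex_spc K (dhomog n.+2 K (1 + t)) (fun v => A (val v))
  (let: And3 a _ _ := cA in a) (fun u v hu hv => let: And3 _ b _ := cA in b _ _ hu hv)
  (fun c u hu => let: And3 _ _ z := cA in z c _ hu).
have [UB' [UK [hUB' [hUK dsum]]]] := @dim_rank _ _ _ (@rho K n (1 + t)) _ _ hU.
exists U; split => //; rewrite -dsum.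
have -> : UB' = UB.
  apply: (spc_eq hUB'); apply: (spc_ext hUB) => w; split.
    case=> f [Af fw].
    exists (DHomog (pihomogP mdeg (1 + t) f)); split; first exact: hA.
    apply/val_inj; rewrite rhoE /= restr_pihomog fw pihomog_dE //.
    exact: dhomog_is_dhomog.
  by case=> v [Av ->]; exists (val v); split.
rewrite dUB; congr (_ + _)%N; rewrite -dUX.
have inj : forall v : dhomog n.+2 K t, A ('X_ord0 * val v) -> mulh (X0_homog K n.+1) v = 0 -> v = 0.
  move=> v _ hv; apply/val_inj; move/(congr1 val): hv; rewrite mulhE /= => /eqP.
  by rewrite mulf_eq0 /= => /orP [/eqP /(congr1 (mcoeff U_(ord0))) |/eqP //];
    rewrite mcoeffX eqxx mcoeff0 => /eqP; rewrite oner_eq0.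
have [UK' [hUK' dUK']] := @dim_img _ _ _ (mulh (X0_homog K n.+1) (t:=t)) _ _ hUX inj.
rewrite -dUK'; congr (\dim _); apply: (spc_eq hUK); apply: (spc_ext hUK') => w; split.
  case=> v [Av ->]; split; first by rewrite mulhE.
  apply/val_inj; rewrite rhoE mulhE restrM restrX0 mul0r; done.
case=> Aw /(congr1 val); rewrite rhoE /= => /restr_ker [a ha].
have e : 'X_ord0 * pihomog mdeg t a = val w.
  rewrite -(@pihomog_mulh _ _ _ a 1 t (X0_homog K n.+1)) -ha pihomog_dE //.
  exact: dhomog_is_dhomog.
exists (DHomog (pihomogP mdeg t a)); split; first by rewrite /= e.
by apply/val_inj; rewrite mulhE /= e.
Qed.
Section Div.
Variable K : fieldType.

Lemma X_neq0 k (m : 'X_{1..k}) : ('X_[m] : {mpoly K[k]}) != 0.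
Proof.
apply/eqP => /(congr1 (mcoeff m)); rewrite mcoeffX eqxx mcoeff0 => /eqP.
by rewrite oner_eq0.
Qed.

Lemma prime_X0 n (c b s : {mpoly K[n.+1]}) : restr c != 0 ->
  c * b = 'X_ord0 * s -> exists b', b = 'X_ord0 * b' /\ c * b' = s.
Proof.
move=> rc h.
have : restr c * restr b = 0 by rewrite -restrM h restrM restrX0 mul0r.
move/eqP; rewrite mulf_eq0 (negbTE rc) /= => /eqP /restr_ker [b' hb].
exists b'; split => //.
move: h; rewrite hb mulrCA => /eqP; rewrite -subr_eq0 -mulrBr mulf_eq0 (negbTE (X_neq0 _)) /=.
by rewrite subr_eq0 => /eqP.
Qed.

Lemma prime_X0n n (c : {mpoly K[n.+1]}) k : restr c != 0 -> forall b s,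
  c * b = 'X_ord0 ^+ k * s -> exists b', b = 'X_ord0 ^+ k * b' /\ c * b' = s.
Proof.
move=> rc; elim: k => [|k IH] b s h.
  by exists b; rewrite expr0 mul1r; move: h; rewrite expr0 mul1r.
move: h; rewrite exprS -mulrA => /(prime_X0 rc) [b1 [hb1 h1]].
have [b' [hb' h']] := IH _ _ h1.
by exists b'; split => //; rewrite hb1 hb' mulrA.
Qed.

Lemma msizeX0M n (a : {mpoly K[n.+1]}) : a != 0 -> msize ('X_ord0 * a) = (msize a).+1.
Proof.
move=> a0; rewrite msizeM ?X_neq0 // msizeX mdeg1 //.
Qed.

Lemma decompX0 n (c : {mpoly K[n.+1]}) : c != 0 ->
  exists j c', c = 'X_ord0 ^+ j * c' /\ restr c' != 0.
Proof.
move: {2}(msize c) (leqnn (msize c)) => N; elim: N c => [|N IH] c hN c0.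
  by move: hN; rewrite leqn0 msize_poly_eq0 (negbTE c0).
case: (eqVneq (restr c) 0) => rc; last by exists 0%N, c; rewrite expr0 mul1r.
have [a ha] := restr_ker rc.
have a0 : a != 0 by apply: contraNneq c0 => a0; rewrite ha a0 mulr0.
have haN : (msize a <= N)%N by move: hN; rewrite ha msizeX0M.
have [j [c' [hc' rc']]] := IH a haN a0.
by exists j.+1, c'; rewrite ha hc' exprS mulrA.
Qed.

Lemma restrXn n (f : {mpoly K[n.+1]}) k : restr (f ^+ k) = restr f ^+ k.
Proof. exact: rmorphXn. Qed.

Lemma restrX1 n : restr ('X_(lift ord0 (ord0 : 'I_n.+1)) : {mpoly K[n.+2]}) = 'X_ord0.
Proof.
rewrite restrX mnm1E /=; congr 'X_[_]; apply/mnmP => i.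
by rewrite !mnmE (inj_eq lift_inj) eq_sym.
Qed.

Lemma divide_sat n (c r q1 q2 : {mpoly K[n.+2]}) k : c != 0 ->
  'X_ord0 ^+ k * r = c * q1 -> 'X_(lift ord0 ord0) ^+ k * r = c * q2 ->
  exists r', r = c * r'.
Proof.
move=> c0 h1 h2.
have [j [c' [hc rc']]] := decompX0 c0.
have [b' [hb' hr]] : exists b', 'X_ord0 ^+ j * q1 = 'X_ord0 ^+ k * b' /\ c' * b' = r.
  by apply: prime_X0n => //; rewrite mulrA [c' * _]mulrC -hc h1.
have c'0 : c' != 0 by apply: contraNneq rc' => ->; rewrite restr0.
have e : 'X_(lift ord0 ord0) ^+ k * b' = 'X_ord0 ^+ j * q2.
  apply/eqP; rewrite -(inj_eq (mulfI c'0)) mulrCA hr h2 hc; apply/eqP.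
  by rewrite -mulrA mulrCA mulrA.
have rX : restr ('X_(lift ord0 ord0) ^+ k : {mpoly K[n.+2]}) != 0.
  by rewrite restrXn restrX1 expf_neq0 // X_neq0.
have [b'' [hb'' _]] := prime_X0n rX e.
by exists b''; rewrite -hr hb'' hc mulrCA mulrA.
Qed.

End Div.
Lemma tst (K : fieldType) : rtup K 3 = [tuple 0; 'X_0; 'X_1; 'X_2].
Proof.
apply: eq_from_tnth => i; rewrite tnth_mktuple (tnth_nth 0).
case: i => [[|j] hi].
  rewrite (_ : Ordinal hi = ord0); last exact/val_inj.
  by rewrite unlift_none.
have hj : (j < 3)%N; first by [].
have -> : Ordinal hi = lift ord0 (Ordinal hj) by apply/val_inj.
rewrite liftK /=.
by case: j hi hj => [|[|[|?]]] hi hj //=; congr 'X_[U_(_)]; apply/val_inj.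
Qed.
Lemma tst2 (K : fieldType) : itup K 3 = [tuple 'X_1; 'X_2; 'X_3].
Proof.
apply: eq_from_tnth => i; rewrite tnth_mktuple (tnth_nth 0).
by case: i => [[|[|[|?]]] hi] //=; congr 'X_[U_(_)]; apply/val_inj.
Qed.
Lemma tst3 : (0 : 'I_4) = ord0. Proof. by apply/val_inj. Qed.
Lemma bin2_2 x : ('C(x, 2) * 2 = x * x.-1)%N.
Proof.
elim: x => [|x IH] //; rewrite binS bin1 mulnDl IH.
case: x {IH} => [|x] //=; lia.
Qed.
Lemma bin2_int x : (('C(x, 2))%:Z * 2 = x%:Z * (x%:Z - 1))%R.
Proof.
have := bin2_2 x; move/(congr1 Posz); rewrite PoszM => ->; rewrite PoszM.
case: x => [|x] /=; first by rewrite !mul0r.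
by congr (_ * _); rewrite -addn1 PoszD addrK.
Qed.

Lemma bin3S x : 'C(x.+3, 3) = ('C(x.+1, 3) + 'C(x.+1, 2) + 'C(x.+2, 2))%N.
Proof. by rewrite binS [in 'C(x.+2, 3)]binS addnAC. Qed.

Lemma binC' x k : 'C(x + k, x) = 'C(x + k, k).
Proof. by have := bin_sub (leq_addl x k); rewrite addnK. Qed.

Lemma final_arith (dl1 e a1 kIZ degZ T : nat) : T = (dl1 + e + a1).+2 ->
  ('C((dl1 + e + a1) + 3, dl1 + e + a1) + 'C((e + a1) + 2, e + a1) + kIZ <= 'C(T + 3, T))%N ->
  (kIZ <= 'C(a1.+1 + 2, a1.+1))%N -> degZ = ('C(a1.+1 + 2, a1.+1) - kIZ)%N ->
  (('C(T + 3, T) - ('C((dl1 + e + a1) + 3, dl1 + e + a1) + 'C((e + a1) + 2, e + a1) + kIZ))%N)%:Z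
  = ((2 * dl1.+1 + e)%N)%:Z * T%:Z + (1 - (('C(2 * dl1.+1 + e - dl1.+1 - 1, 2) + 'C(dl1.+1 - 1, 2) + dl1.+1)%N%:Z - degZ%:Z - 1)).
Proof.
move=> eT h1 h2 ->.
have eg : (2 * dl1.+1 + e - dl1.+1 - 1 = dl1 + e)%N by lia.
rewrite eg subSS subn0.
move: h1; rewrite !binC' => h1.
rewrite !binC' in h2.
rewrite -(subzn h1) -(subzn h2).
clear h1 h2; subst T.
set x := (dl1 + e + a1)%N.
have e5 : 'C(x.+2 + 3, 3) = ('C(x + 3, 3) + 'C(x + 3, 2) + 'C(x + 4, 2))%N.
  by rewrite !addn3 addn4 bin3S.
rewrite e5.
have b1 := bin2_int (x + 3). have b2 := bin2_int (x + 4). have b3 := bin2_int (e + a1 + 2).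
have b4 := bin2_int (a1.+1 + 2). have b5 := bin2_int (dl1 + e). have b6 := bin2_int dl1.
move: b1 b2 b3 b4 b5 b6; rewrite /x.
move: ('C(_, 2)) => c1.
lia.
Qed.
Section Aux.
Variable K : fieldType.

Lemma pihomogX' n d (m : 'X_{1..n}) :
  pihomog mdeg d ('X_[m] : {mpoly K[n]}) = if (mdeg m == d)%N then 'X_[m] else 0.
Proof. exact: pihomogX. Qed.

Lemma incl_pihomog n j (g : {mpoly K[n]}) : incl (pihomog mdeg j g) = pihomog mdeg j (incl g).
Proof.
move: g; apply: (mpoly_lin_ext (f := fun g => incl (pihomog mdeg j g))
  (g := fun g => pihomog mdeg j (incl g))).
- by move=> a p q; rewrite linearP inclD inclZ.
- by move=> a p q; rewrite inclD inclZ linearP.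
move=> m; rewrite pihomogX' inclX pihomogX' mdeg_mcons0.
by case: ifP; rewrite ?incl0 ?inclX.
Qed.

Lemma incl_homog n d (g : {mpoly K[n]}) : g \is d.-homog -> incl g \is d.-homog.
Proof. by rewrite !homog_piE => /eqP h; rewrite -incl_pihomog h. Qed.

Lemma homog0_const n (p : {mpoly K[n]}) : p \is 0.-homog -> p = (p@_0%MM)%:MP.
Proof.
move=> hp; apply/mpolyP => m; rewrite mcoeffC.
case: (eqVneq m 0%MM) => [->|nm]; first by rewrite ?eqxx ?mulr1.
rewrite mulr0; apply: (dhomog_nemf_coeff hp).
by rewrite -[_ != 0%N]/(mdeg m != 0%N) mdeg_eq0.
Qed.

Lemma hd_ext n (A B : {mpoly K[n.+1]} -> Prop) t k :
  hd A t k -> (forall f, A f <-> B f) -> hd B t k.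
Proof. by case=> U [hU dU] hAB; exists U; split => //; apply: (spc_ext hU) => v. Qed.

Lemma hd_le n (A : {mpoly K[n.+1]} -> Prop) t k : hd A t k -> (k <= 'C(t + n, t))%N.
Proof. by case=> U [_ <-]; rewrite -(dim_dh K n t) dimvS // subvf. Qed.

Lemma pihomog_mul_ex n (c a : {mpoly K[n]}) e j : c \is e.-homog ->
  exists a', pihomog mdeg j (c * a) = c * a'.
Proof.
move=> hc; case: (leqP e j) => hj.
  by exists (pihomog mdeg (j - e) a); rewrite -(@pihomog_mulh _ _ c a e (j - e) hc) subnKC.
by exists 0; rewrite mulr0 (@pihomog_mulh_lt _ _ c a e j hc).
Qed.

Lemma closed_ideal n (J : pred {mpoly K[n]}) : is_ideal J -> closedP (fun f => f \in J).
Proof.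
case=> J0 JD JM; split => // c u hu.
by rewrite -mul_mpolyC; apply: JM.
Qed.

End Aux.
Lemma restrHE (K : fieldType) (f : {mpoly K[4]}) : restrH f = restr f.
Proof. by rewrite /restrH /restr tst. Qed.

Lemma incSE (K : fieldType) (f : {mpoly K[3]}) : incS f = incl f.
Proof. by rewrite /incS /incl tst2. Qed.

Lemma X0E (K : fieldType) : ('X_0 : {mpoly K[4]}) = 'X_ord0.
Proof. by rewrite tst3. Qed.

Lemma XUk (K : fieldType) n (i : 'I_n) k : ('X_i : {mpoly K[n]}) ^+ k = 'X_[U_(i) *+ k].
Proof. exact: mpolyXn. Qed.

Lemma mdegUk n (i : 'I_n) k : mdeg (U_(i) *+ k)%MM = k.
Proof. by rewrite mdegMn mdeg1 mul1n. Qed.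

Section Main.
Variables (K : closedFieldType) (IZ : pred {mpoly K[3]}) (degZ : nat)
  (p h : {mpoly K[3]}) (delta e : nat) (J : pred {mpoly K[4]}).
Hypotheses (hIZ : is_homog_ideal IZ) (satIZ : saturated IZ) (dZ : (0 < degZ)%N)
  (hpIZ : hilb_poly IZ (degZ%:Z)%:P)
  (p0 : p != 0) (hp : p \is delta.-homog) (h0 : h != 0) (hh : h \is e.-homog)
  (pIZ : p \in IZ) (hJ : is_homog_ideal J).
Hypothesis hres : forall g : {mpoly K[3]},
  (exists f, f \in J /\ restr f = g) <-> (exists q, q \in IZ /\ g = p * h * q).
Definition Jp (f : {mpoly K[4]}) := exists a b, f = 'X_ord0 * a + incl p * b.
Hypothesis hcol : forall f : {mpoly K[4]}, 'X_ord0 * f \in J <-> Jp f.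

Lemma ph0 : p * h != 0. Proof. by rewrite mulf_neq0. Qed.

Lemma J_sat : saturated J.
Proof.
case: hJ => [[J0 JD JM] JH].
have JN : forall f, f \in J -> - f \in J by move=> f /(JM (-1)); rewrite mulN1r.
move=> f [k hk].
set r := restr f.
have hmu : forall mu : 'X_{1..3}, mdeg mu = k -> exists q, q \in IZ /\ 'X_[mu] * r = p * h * q.
  move=> mu hmu; apply/hres; exists ('X_[mcons0 mu] * f); split.
    by apply: hk; rewrite mdeg_mcons0.
  by rewrite restrM restrX mcons0_0 eqxx mtail_mcons0.
have [q1 [_ e1]] := hmu _ (mdegUk ord0 k).
have [q2 [_ e2]] := hmu _ (mdegUk (lift ord0 ord0) k).
rewrite -XUk in e1; rewrite -XUk in e2.
have [r' hr'] := divide_sat ph0 e1 e2.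
have r'IZ : r' \in IZ.
  apply: satIZ; exists k => mu hm.
  have [q [qI eq]] := hmu mu hm.
  move: eq; rewrite hr' mulrCA => /(mulfI ph0) ->; exact: qI.
have [f' [Jf' rf']] : exists f', f' \in J /\ restr f' = r by apply/hres; exists r'.
have [a ha] : exists a, f - f' = 'X_ord0 * a.
  by apply: restr_ker; rewrite restrB rf' subrr.
have Jpa : Jp a.
  have hmu2 : forall mu : 'X_{1..3}, mdeg mu = k -> exists v, 'X_[mu] * restr a = p * v.
    move=> mu hm.
    have : Jp ('X_[mcons0 mu] * a).
      apply/hcol; rewrite mulrCA -ha mulrBr; apply: JD; first by apply: hk; rewrite mdeg_mcons0.
      by apply: JN; apply: JM.
    case=> a1 [b1 eq1]; exists (restr b1).
    move/(congr1 (@restr K 3)): eq1; rewrite restrM restrX mcons0_0 eqxx mtail_mcons0 => ->.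
    by rewrite restrD !restrM restrX0 mul0r add0r restr_incl.
  have [v1 ev1] := hmu2 _ (mdegUk ord0 k).
  have [v2 ev2] := hmu2 _ (mdegUk (lift ord0 ord0) k).
  rewrite -XUk in ev1; rewrite -XUk in ev2.
  have [w hw] := divide_sat p0 ev1 ev2.
  have [u hu] : exists u, a - incl p * incl w = 'X_ord0 * u.
    by apply: restr_ker; rewrite restrB restrM !restr_incl hw subrr.
  by exists u, (incl w); rewrite -hu subrK.
have : 'X_ord0 * a \in J by apply/hcol.
rewrite -ha => Jd.
by have := JD _ _ Jd Jf'; rewrite subrK.
Qed.


Lemma delta_pos : (0 < delta)%N.
Proof.
rewrite lt0n; apply/negP => /eqP d0.
have hp0 := hp; rewrite d0 in hp0.
have pc := homog0_const hp0.
have c0 : p@_0%MM != 0 by apply: contraNneq p0 => c0; rewrite pc c0.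
have all : forall f, f \in IZ.
  move=> f; case: hIZ => [[_ _ JM] _].
  have -> : f = ((p@_0%MM)^-1 *: f) * p.
    by rewrite {2}pc mulrC mul_mpolyC scalerA mulfV // scale1r.
  exact: JM.
case: hpIZ => N /(_ N (leqnn N)) [hh' [[[F [_ hF]] _] eh]].
have ehh : hh' = degZ.
  by move: eh; rewrite hornerC => /eqP; rewrite eqz_nat => /eqP.
rewrite ehh in F hF.
have := hF (fun _ => 1) (all _) (Ordinal dZ) => /eqP; by rewrite oner_eq0.
Qed.

Lemma closedJp : closedP Jp.
Proof.
split.
- by exists 0, 0; rewrite !mulr0 addr0.
- move=> u v [a1 [b1 ->]] [a2 [b2 ->]]; exists (a1 + a2), (b1 + b2).
  by rewrite !mulrDr addrACA.
- move=> c u [a1 [b1 ->]]; exists (c *: a1), (c *: b1).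
  by rewrite scalerDr -!scalerAr.
Qed.

Lemma homogCJp : homogC Jp.
Proof.
move=> f j [a [b ->]]; rewrite pihomogD.
have [a' ->] := @pihomog_mul_ex _ _ 'X_ord0 a 1 j (X0_homog K 3).
have [b' ->] := @pihomog_mul_ex _ _ (incl p) b delta j (incl_homog hp).
by exists a', b'.
Qed.


Lemma J_hilb : hilb_poly J (((2 * delta + e)%N)%:Z *: 'X +
   (1 - (('C((2 * delta + e)%N - delta - 1, 2) + 'C(delta - 1, 2) + delta)%N%:Z - degZ%:Z - 1))%:P).
Proof.
case: hpIZ => N hN.
have [dl1 edl] : exists dl1, delta = dl1.+1 by exists delta.-1; rewrite prednK // delta_pos.
exists (N + (delta + e) + 2)%N => T hT.
set a := (T - (delta + e))%N.
have haN : (N <= a)%N by rewrite /a; lia.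
have [a1 ea] : exists a1, a = a1.+1 by exists a.-1; rewrite prednK // /a; lia.
set x := (dl1 + e + a1)%N.
have eT : T = x.+2 by move: ea; rewrite /x /a edl; lia.
have cIZ := closed_ideal hIZ.1.
have [kIZ hkIZ] := @hd_ex K 2 (fun f => f \in IZ) a cIZ.
have [hh' [hf eh]] := hN a haN.
have ehh : hh' = degZ.
  by move: eh; rewrite hornerC => /eqP; rewrite eqz_nat => /eqP.
rewrite ehh in hf.
have dZe := hilb_hd_inv hkIZ hf.
have kle := hd_le hkIZ.
have hJr : hd (fun g => exists f, f \in J /\ restr f = g) ((delta + e) + a) kIZ.
  apply: (@hd_mul K 2 (p * h) (delta + e) a _ (fun q => q \in IZ) kIZ ph0 (dhomogM hp hh) _ _ hkIZ).
    by move=> q j; apply: hIZ.2.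
  by move=> f _; apply: hres.
have eJr : ((delta + e) + a = 1 + (1 + x))%N by rewrite ea /x edl; lia.
rewrite eJr in hJr.
have hJp1 : hd (fun g => exists f, Jp f /\ restr f = g) (delta + (e + a1)) 'C((e + a1) + 2, e + a1).
  apply: (@hd_mul K 2 p delta (e + a1) _ (fun _ => True) _ p0 hp _ _ (hd_full _ _ _)) => //.
  move=> f _; split.
    case=> f' [[a' [b' ->]] <-]; exists (restr b'); split => //.
    by rewrite restrD !restrM restrX0 mul0r add0r restr_incl.
  case=> q [_ ->]; exists (incl p * incl q); split.
    by exists 0, (incl q); rewrite mulr0 add0r.
  by rewrite restrM !restr_incl.
have e1 : (delta + (e + a1) = 1 + x)%N by rewrite /x edl; lia.
rewrite e1 in hJp1.
have hJp2 : hd (fun b => Jp ('X_ord0 * b)) x 'C(x + 3, x).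
  apply: (hd_ext (hd_full _ _ _)) => f; split => // _; exists f, 0; by rewrite mulr0 addr0.
have hJp := hd_split closedJp homogCJp hJp1 hJp2.
have hJx : hd (fun f => 'X_ord0 * f \in J) (1 + x) ('C(x + 3, x) + 'C(e + a1 + 2, e + a1)).
  by apply: (hd_ext hJp) => f; rewrite hcol.
have hJJ := hd_split (closed_ideal hJ.1) hJ.2 hJr hJx.
have hil := hilb_hd hJJ.
have kJle := hd_le hJJ.
exists ('C((1 + (1 + x)) + 3, 1 + (1 + x)) - ('C(x + 3, x) + 'C(e + a1 + 2, e + a1) + kIZ))%N.
rewrite eT; split; first exact: hil.
rewrite hornerD hornerZ hornerX hornerC edl.
apply: final_arith => //.
- by rewrite -ea.
- by rewrite -ea.
Qed.

End Main.

Unset Implicit Arguments.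

Theorem lemma3p2 (K : closedFieldType)
  (IZ : pred {mpoly K[3]}) (degZ : nat)
  (p h : {mpoly K[3]}) (delta e : nat)
  (J : pred {mpoly K[4]}) :
  (* Z : nonempty zero-dimensional subscheme of H with saturated ideal IZ, deg Z = degZ *)
  is_homog_ideal IZ -> saturated IZ -> hilb_poly IZ (degZ%:Z)%:P -> (0 < degZ)%N ->
  (* p, h nonzero homogeneous of degrees delta and e *)
  p != 0 -> p \is delta.-homog -> h != 0 -> h \is e.-homog ->
  (* Z is contained in C' = V(x,p) (hence in P = V(x,ph)) *)
  p \in IZ ->
  (* J homogeneous ideal with (J + xR)/xR = ph I_{Z,H} *)
  is_homog_ideal J ->
  (forall g : {mpoly K[3]},
     (exists f, f \in J /\ restrH f = g) <-> (exists q, q \in IZ /\ g = p * h * q)) ->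
  (* J : (x) = (x, p) *)
  (forall f : {mpoly K[4]},
     'X_0 * f \in J <-> exists a b, f = 'X_0 * a + incS p * b) ->
  let d := (2 * delta + e)%N in
  let g := ('C(d - delta - 1, 2) + 'C(delta - 1, 2) + delta)%:Z - degZ%:Z - 1 in
  saturated J /\ hilb_poly J (d%:Z *: 'X + (1 - g)%:P).
Proof.
move=> hIZ satIZ hpIZ dZ p0 hp h0 hh pIZ hJ hres hcol d g.
have hres' : forall g0 : {mpoly K[3]}, (exists f, f \in J /\ restr f = g0) <->
    (exists q, q \in IZ /\ g0 = p * h * q).
  move=> g0; rewrite -hres; split; case=> f [Jf rf]; exists f; split => //.
    by rewrite restrHE.
  by rewrite -restrHE.
have hcol' : forall f, 'X_ord0 * f \in J <-> Jp p f.
  move=> f; rewrite -X0E hcol /Jp; split; case=> a [b ->]; exists a, b.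
    by rewrite incSE X0E.
  by rewrite incSE X0E.
split.
  exact: (J_sat satIZ p0 h0 hJ hres' hcol').
exact: (J_hilb hIZ dZ hpIZ p0 hp h0 hh pIZ hJ hres' hcol').
Qed.
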